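(* The mechanism given by Algorithm 3 (defined in the context) is risk-averse truthful when all agents are hungry, i.e. when the domain of true densities, reports, and other agents' reports is the set of strictly positive piecewise-constant functions on $[0,1]$.
   Context: Algorithm 3 (for $n$ agents with strictly positive piecewise-constant densities $f_i:[0,1]\to\mathbb{R}_{>0}$, $v_i(X)=\int_X f_i$): for each agent $i$, let $0=x_0^{(i)}<x_1^{(i)}<\dots<x_{n-1}^{(i)}<x_n^{(i)}=1$ be the points with $v_i([x_j^{(i)},x_{j+1}^{(i)}))=\frac1n v_i([0,1])$ for all $j$. Set $c_0=0$ and $U=\{1,\dots,n\}$. For $j=1,\dots,n-1$: let $i_j\in U$ minimize $x_j^{(i)}$ over $i\in U$ (ties broken by smallest index), set $c_j=x_j^{(i_j)}$, give $[c_{j-1},c_j)$ to $i_j$, and remove $i_j$ from $U$. The remaining agent receives $[c_{n-1},1]$. A mechanism $\mathcal{M}$ is risk-averse truthful if for each agent $i$, each true density $f_i$ and each report $f_i'$ (in the domain), at least one holds: (1) for all reports $f_{-i}=(f_j)_{j\ne i}$ of the others, $v_i(\mathcal{M}_i(f_i,f_{-i}))\ge v_i(\mathcal{M}_i(f_i',f_{-i}))$; (2) there exist $f_{-i}$ with $v_i(\mathcal{M}_i(f_i',f_{-i}))<\frac1n v_i([0,1])$ (utilities w.r.t. the true $f_i$). *)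

(* Defs.v *)
From Stdlib Require Import Reals Lra Lia List ClassicalEpsilon.
From Coquelicot Require Import Coquelicot.
Import ListNotations.
Open Scope R_scope.

(* Agents are 0, 1, ..., n-1 (0-indexed); a profile assigns a density to each agent. *)

Definition pc_pos (f : R -> R) : Prop :=
  (forall x, 0 <= x <= 1 -> 0 < f x) /\
  exists (k : nat) (p a : nat -> R),
    p 0%nat = 0 /\ p k = 1 /\
    (forall m, (m < k)%nat -> p m < p (S m)) /\
    (forall m x, (m < k)%nat -> p m <= x < p (S m) -> f x = a m).

(* Value of an interval piece [a,b) (endpoints have measure zero). *)
Definition val (f : R -> R) (piece : R * R) : R := RInt f (fst piece) (snd piece).

(* x_j^{(i)}: the point x in [0,1] with v([0,x)) = j/n * v([0,1]);
   for a strictly positive integrable density it is unique. *)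
Definition mark (n : nat) (f : R -> R) (j : nat) : R :=
  epsilon (inhabits 0)
    (fun x => 0 <= x <= 1 /\ RInt f 0 x = INR j / INR n * RInt f 0 1).

(* Index in l (scanned from the current best d, l sorted increasingly) minimizing g,
   ties broken by the smallest index (strict comparison keeps the earlier one). *)
Fixpoint argmin (g : nat -> R) (d : nat) (l : list nat) : nat :=
  match l with
  | [] => d
  | i :: l' => if Rlt_dec (g i) (g d) then argmin g i l' else argmin g d l'
  end.

(* Algorithm 3: fuel = number of remaining cut steps, j = current step,
   c = c_{j-1}, U = remaining agents (increasing). Output: (agent, (left, right)). *)
Fixpoint run (n : nat) (F : nat -> R -> R) (fuel j : nat) (c : R) (U : list nat)
  : list (nat * (R * R)) :=
  match fuel with
  | O => match U with i :: _ => [(i, (c, 1))] | [] => [] end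
  | S fuel' =>
      match U with
      | [] => []
      | i0 :: U' =>
          let w := argmin (fun i => mark n (F i) j) i0 U' in
          let cj := mark n (F w) j in
          (w, (c, cj)) :: run n F fuel' (S j) cj (remove Nat.eq_dec w U)
      end
  end.

Definition alg3_alloc (n : nat) (F : nat -> R -> R) : list (nat * (R * R)) :=
  run n F (n - 1) 1 0 (seq 0 n).

Definition alg3 (n : nat) (F : nat -> R -> R) (i : nat) : R * R :=
  match find (fun e => Nat.eqb (fst e) i) (alg3_alloc n F) with
  | Some e => snd e
  | None => (0, 0)
  end.

Definition upd (G : nat -> R -> R) (i : nat) (g : R -> R) : nat -> R -> R :=
  fun j => if Nat.eq_dec j i then g else G j.

Definition risk_averse_truthful (D : (R -> R) -> Prop)
  (M : nat -> (nat -> R -> R) -> nat -> R * R) : Prop :=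
  forall (n i : nat) (f f' : R -> R), (i < n)%nat -> D f -> D f' ->
    (forall G : nat -> R -> R,
        (forall j, (j < n)%nat -> j <> i -> D (G j)) ->
        val f (M n (upd G i f) i) >= val f (M n (upd G i f') i))
    \/
    (exists G : nat -> R -> R,
        (forall j, (j < n)%nat -> j <> i -> D (G j)) /\
        val f (M n (upd G i f') i) < / INR n * RInt f 0 1).

(* Main.v *)
Require Import Defs.
From Stdlib Require Import Reals Lra Lia List ClassicalEpsilon Classical.
From Coquelicot Require Import Coquelicot.
Import ListNotations.
Open Scope R_scope.

Lemma p_mono (p : nat -> R) (k : nat) :
  (forall m, (m < k)%nat -> p m < p (S m)) ->
  forall a b, (a <= b <= k)%nat -> p a <= p b.
Proof.
  intros H a b [Hab Hbk]. induction b as [|b IH].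
  - assert (a = 0%nat) by lia. subst; lra.
  - destruct (Nat.eq_dec a (S b)) as [->|Hne]; [lra|].
    assert (p a <= p b) by (apply IH; lia). specialize (H b ltac:(lia)). lra.
Qed.

Lemma p_smono (p : nat -> R) (k : nat) :
  (forall m, (m < k)%nat -> p m < p (S m)) ->
  forall a b, (a < b <= k)%nat -> p a < p b.
Proof.
  intros H a b [Hab Hbk]. destruct b as [|b]; [lia|].
  assert (p a <= p b) by (apply (p_mono p k); auto; lia).
  specialize (H b ltac:(lia)). lra.
Qed.

Lemma piece_find (p : nat -> R) (k : nat) :
  (forall m, (m < k)%nat -> p m < p (S m)) ->
  forall x, p 0%nat <= x < p k -> exists m, (m < k)%nat /\ p m <= x < p (S m).
Proof.
  induction k as [|k IH]; intros H x Hx.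
  - lra.
  - destruct (Rlt_dec x (p k)) as [Hl|Hl].
    + destruct (IH (fun m Hm => H m ltac:(lia)) x ltac:(lra)) as [m [Hm1 Hm2]].
      exists m; split; [lia|lra].
    + exists k; split; [lia|lra].
Qed.

Lemma pc_int (f : R -> R) (p a : nat -> R) (k : nat) :
  (forall m, (m < k)%nat -> p m < p (S m)) ->
  (forall m x, (m < k)%nat -> p m <= x < p (S m) -> f x = a m) ->
  forall j, (j <= k)%nat -> ex_RInt f (p 0%nat) (p j).
Proof.
  intros Hp Hf. induction j as [|j IH]; intros Hj.
  - apply ex_RInt_point.
  - apply ex_RInt_Chasles with (p j); [apply IH; lia|].
    apply ex_RInt_ext with (fun _ => a j); [|apply ex_RInt_const].
    intros x Hx. specialize (Hp j ltac:(lia)).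
    rewrite Rmin_left in Hx by lra. rewrite Rmax_right in Hx by lra.
    symmetry; apply (Hf j x); [lia|lra].
Qed.

Lemma pc_int_val (f : R -> R) (p a : nat -> R) (k : nat) (c : R) :
  (forall m, (m < k)%nat -> p m < p (S m)) ->
  (forall m x, (m < k)%nat -> p m <= x < p (S m) -> f x = a m) ->
  (forall m, (m < k)%nat -> a m * (p (S m) - p m) = c) ->
  forall j, (j <= k)%nat -> RInt f (p 0%nat) (p j) = INR j * c.
Proof.
  intros Hp Hf Hc. induction j as [|j IH]; intros Hj.
  - rewrite RInt_point. simpl. unfold zero; simpl; lra.
  - rewrite <- (RInt_Chasles f (p 0%nat) (p j) (p (S j))).
    + rewrite IH by lia.
      rewrite (RInt_ext f (fun _ => a j)).
      * rewrite RInt_const. change (plus (INR j * c) (scal (p (S j) - p j) (a j)) = INR (S j) * c).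
        change (INR j * c + (p (S j) - p j) * a j = INR (S j) * c). rewrite S_INR.
        specialize (Hc j ltac:(lia)). lra.
      * intros x Hx. specialize (Hp j ltac:(lia)).
        rewrite Rmin_left in Hx by lra. rewrite Rmax_right in Hx by lra.
        apply (Hf j x); [lia|lra].
    + apply (pc_int f p a k Hp Hf); lia.
    + apply ex_RInt_ext with (fun _ => a j); [|apply ex_RInt_const].
      intros x Hx. specialize (Hp j ltac:(lia)).
      rewrite Rmin_left in Hx by lra. rewrite Rmax_right in Hx by lra.
      symmetry; apply (Hf j x); [lia|lra].
Qed.

Fixpoint mx (a : nat -> R) (k : nat) : R :=
  match k with O => 0 | S k' => Rmax (a k') (mx a k') end.
Fixpoint mn (a : nat -> R) (k : nat) : R :=
  match k with O => 1 | S k' => Rmin (a k') (mn a k') end.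

Lemma mx_ge a k m : (m < k)%nat -> a m <= mx a k.
Proof.
  induction k; intros H; [lia|]. simpl.
  destruct (Nat.eq_dec m k) as [->|]; [apply Rmax_l|].
  eapply Rle_trans; [apply IHk; lia|apply Rmax_r].
Qed.
Lemma mn_le a k m : (m < k)%nat -> mn a k <= a m.
Proof.
  induction k; intros H; [lia|]. simpl.
  destruct (Nat.eq_dec m k) as [->|]; [apply Rmin_l|].
  eapply Rle_trans; [apply Rmin_r|apply IHk; lia].
Qed.
Lemma mn_pos a k : (forall m, (m < k)%nat -> 0 < a m) -> 0 < mn a k.
Proof.
  induction k; intros H; simpl; [lra|].
  apply Rmin_glb_lt; [apply H; lia|apply IHk; intros; apply H; lia].
Qed.

Definition good (f : R -> R) (mu M : R) : Prop :=
  0 < mu /\ (forall x, 0 <= x <= 1 -> mu <= f x <= M) /\ ex_RInt f 0 1.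

Lemma pc_good f : pc_pos f -> exists mu M, good f mu M.
Proof.
  intros [Hpos [k [p [a [H0 [Hk [Hp Hf]]]]]]].
  assert (Hpm : forall m, (m <= k)%nat -> 0 <= p m <= 1).
  { intros m Hm. rewrite <- H0, <- Hk. split; apply (p_mono p k Hp); lia. }
  assert (Ha : forall m, (m < k)%nat -> a m = f (p m)).
  { intros m Hm. symmetry; apply Hf; auto. specialize (Hp m Hm); lra. }
  exists (Rmin (f 1) (mn a k)), (Rmax (f 1) (mx a k)). split; [|split].
  - apply Rmin_glb_lt; [apply Hpos; lra|]. apply mn_pos. intros m Hm.
    rewrite Ha by auto. apply Hpos, Hpm; lia.
  - intros x Hx. destruct (Req_dec x 1) as [->|Hx1].
    + split; [apply Rmin_l|apply Rmax_l].
    + destruct (piece_find p k Hp x ltac:(lra)) as [m [Hm Hxm]].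
      rewrite (Hf m x Hm Hxm). split.
      * eapply Rle_trans; [apply Rmin_r|apply mn_le; auto].
      * eapply Rle_trans; [apply mx_ge; eauto|apply Rmax_r].
  - rewrite <- H0, <- Hk. apply (pc_int f p a k Hp Hf); lia.
Qed.

Lemma g_ex f mu M a b : good f mu M -> 0 <= a <= 1 -> 0 <= b <= 1 -> ex_RInt f a b.
Proof.
  intros [_ [_ H]] Ha Hb.
  assert (K : forall a b, 0 <= a <= b -> b <= 1 -> ex_RInt f a b).
  { intros a' b' H1 H2. apply (ex_RInt_Chasles_2 f 0 a' b'); [lra|].
    apply (ex_RInt_Chasles_1 f 0 b' 1); [lra|auto]. }
  destruct (Rle_dec a b). apply K; lra. apply ex_RInt_swap, K; lra.
Qed.

Lemma g_chas f mu M a b c : good f mu M -> 0 <= a <= 1 -> 0 <= b <= 1 -> 0 <= c <= 1 ->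
  RInt f a b + RInt f b c = RInt f a c.
Proof.
  intros G Ha Hb Hc. rewrite <- (RInt_Chasles f a b c); try (eapply g_ex; eauto).
  reflexivity.
Qed.

Lemma g_bnd f mu M a b : good f mu M -> 0 <= a -> a <= b -> b <= 1 ->
  mu * (b - a) <= RInt f a b <= M * (b - a).
Proof.
  intros G Ha Hab Hb. pose proof G as [Hmu [Hf _]].
  assert (E : ex_RInt f a b) by (eapply g_ex; eauto; lra).
  split.
  - replace (mu * (b - a)) with (RInt (fun _ => mu) a b).
    + apply RInt_le; auto. apply ex_RInt_const. intros x Hx. apply Hf; lra.
    + rewrite RInt_const. change ((b - a) * mu = mu * (b - a)). ring.
  - replace (M * (b - a)) with (RInt (fun _ => M) a b).
    + apply RInt_le; auto. apply ex_RInt_const. intros x Hx. apply Hf; lra.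
    + rewrite RInt_const. change ((b - a) * M = M * (b - a)). ring.
Qed.

Lemma g_strict f mu M a b : good f mu M -> 0 <= a -> a < b -> b <= 1 ->
  RInt f 0 a < RInt f 0 b.
Proof.
  intros G Ha Hab Hb. rewrite <- (g_chas f mu M 0 a b G) by lra.
  pose proof (g_bnd f mu M a b G Ha ltac:(lra) Hb). destruct G as [Hmu _].
  assert (0 < mu * (b - a)) by (apply Rmult_lt_0_compat; lra). lra.
Qed.

Lemma g_uniq f mu M a b : good f mu M -> 0 <= a <= 1 -> 0 <= b <= 1 ->
  RInt f 0 a = RInt f 0 b -> a = b.
Proof.
  intros G Ha Hb E. destruct (Rtotal_order a b) as [H|[H|H]]; auto.
  - pose proof (g_strict f mu M a b G ltac:(lra) H ltac:(lra)). lra.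
  - pose proof (g_strict f mu M b a G ltac:(lra) H ltac:(lra)). lra.
Qed.

Definition cl (x : R) : R := Rmax 0 (Rmin 1 x).

Lemma cl_in x : 0 <= cl x <= 1.
Proof. unfold cl, Rmax, Rmin. repeat destruct Rle_dec; lra. Qed.
Lemma cl_lip x y : Rabs (cl x - cl y) <= Rabs (x - y).
Proof. unfold cl, Rmax, Rmin, Rabs. repeat destruct Rle_dec; repeat destruct Rcase_abs; lra. Qed.
Lemma cl_id x : 0 <= x <= 1 -> cl x = x.
Proof. unfold cl, Rmax, Rmin. repeat destruct Rle_dec; lra. Qed.

Lemma g_lip f mu M a b : good f mu M -> 0 <= a <= 1 -> 0 <= b <= 1 ->
  Rabs (RInt f 0 b - RInt f 0 a) <= M * Rabs (b - a).
Proof.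
  intros G Ha Hb. pose proof (g_chas f mu M 0 a b G ltac:(lra) Ha Hb) as C0.
  assert (E : RInt f 0 b - RInt f 0 a = RInt f a b) by lra. rewrite E.
  destruct (Rle_dec a b).
  - pose proof (g_bnd f mu M a b G ltac:(lra) r ltac:(lra)). destruct G as [Hmu _].
    rewrite !Rabs_right; try lra. nra.
  - pose proof (g_bnd f mu M b a G ltac:(lra) ltac:(lra) ltac:(lra)).
    pose proof (g_chas f mu M a b a G Ha Hb Ha) as C. destruct G as [Hmu _].
    rewrite RInt_point in C. change (RInt f a b + RInt f b a = 0) in C.
    rewrite Rabs_left by nra. rewrite Rabs_left by lra. nra.
Qed.

Lemma g_exists f mu M c : good f mu M -> 0 <= c <= RInt f 0 1 ->
  exists x, 0 <= x <= 1 /\ RInt f 0 x = c.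
Proof.
  intros G Hc.
  assert (HM : 0 < M). { destruct G as [Hmu [Hf _]]. specialize (Hf 0 ltac:(lra)). lra. }
  set (h := fun x => RInt f 0 (cl x) - c).
  assert (Hcont : continuity h).
  { intros x0. unfold continuity_pt, continue_in, limit1_in, limit_in.
    intros eps He. exists (eps / (M + 1)). split.
    { apply Rdiv_lt_0_compat; lra. }
    intros x [_ Hx]. simpl in *. unfold R_dist in *. unfold h.
    replace (RInt f 0 (cl x) - c - (RInt f 0 (cl x0) - c)) with
      (RInt f 0 (cl x) - RInt f 0 (cl x0)) by ring.
    eapply Rle_lt_trans; [apply (g_lip f mu M); eauto using cl_in|].
    eapply Rle_lt_trans; [apply Rmult_le_compat_l; [lra|apply cl_lip]|].
    assert (Rabs (x - x0) * (M + 1) < eps).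
    { apply (Rmult_lt_compat_r (M+1)) in Hx; [|lra].
      unfold Rdiv in Hx. rewrite Rmult_assoc, Rinv_l in Hx by lra. lra. }
    pose proof (Rabs_pos (x - x0)). nra. }
  destruct (IVT_cor h 0 1 Hcont ltac:(lra)) as [z [Hz Hhz]].
  { unfold h. rewrite !cl_id by lra. rewrite RInt_point. change (0 - c) with (0 - c).
    change (@zero R_AbelianGroup) with 0. unfold zero; simpl. nra. }
  exists z. split; auto. unfold h in Hhz. rewrite cl_id in Hhz by lra. lra.
Qed.

Lemma g_pos_total f mu M : good f mu M -> 0 < RInt f 0 1.
Proof.
  intros G. pose proof (g_strict f mu M 0 1 G ltac:(lra) ltac:(lra) ltac:(lra)).
  rewrite RInt_point in H. exact H.
Qed.

Lemma mark_spec f mu M n j : good f mu M -> (0 < n)%nat -> (j <= n)%nat ->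
  0 <= mark n f j <= 1 /\ RInt f 0 (mark n f j) = INR j / INR n * RInt f 0 1.
Proof.
  intros G Hn Hj. unfold mark. apply epsilon_spec.
  pose proof (g_pos_total f mu M G) as HT.
  assert (Hn' : 0 < INR n) by (apply lt_0_INR; lia).
  assert (Hjn : INR j <= INR n) by (apply le_INR; lia).
  assert (0 <= INR j / INR n <= 1).
  { split. apply Rdiv_le_0_compat; [apply pos_INR|lra].
    apply Rmult_le_reg_r with (INR n); [lra|]. unfold Rdiv.
    rewrite Rmult_assoc, Rinv_l by lra. lra. }
  destruct (g_exists f mu M (INR j / INR n * RInt f 0 1) G) as [x Hx]; [nra|].
  exists x; exact Hx.
Qed.

Lemma mark_eq f mu M n j x : good f mu M -> (0 < n)%nat -> (j <= n)%nat ->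
  0 <= x <= 1 -> RInt f 0 x = INR j / INR n * RInt f 0 1 -> mark n f j = x.
Proof.
  intros G Hn Hj Hx E. destruct (mark_spec f mu M n j G Hn Hj) as [H1 H2].
  apply (g_uniq f mu M); auto. lra.
Qed.

Lemma argmin_in g d l : In (argmin g d l) (d :: l).
Proof.
  revert d; induction l as [|a l IH]; intros d; simpl; [auto|].
  destruct Rlt_dec.
  - destruct (IH a) as [E|E]; [rewrite <- E; auto|auto].
  - destruct (IH d) as [E|E]; [rewrite <- E; auto|auto].
Qed.

Lemma argmin_le g d l : forall x, In x (d :: l) -> g (argmin g d l) <= g x.
Proof.
  revert d; induction l as [|a l IH]; intros d x Hx; simpl.
  - destruct Hx as [->|[]]; lra.
  - destruct Rlt_dec as [Hl|Hl].
    + destruct Hx as [->|Hx].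
      * eapply Rle_trans; [apply IH; left; reflexivity|lra].
      * apply IH; exact Hx.
    + destruct Hx as [->|[->|Hx]].
      * apply IH; left; auto.
      * eapply Rle_trans; [apply IH; left; reflexivity|lra].
      * apply IH; right; exact Hx.
Qed.

Lemma argmin_ext g g' d l : (forall x, g x = g' x) -> argmin g d l = argmin g' d l.
Proof.
  intros H. revert d; induction l as [|a l IH]; intros d; simpl; auto.
  rewrite !H. destruct Rlt_dec; auto.
Qed.

Lemma run_ext n F F' : forall fuel j c U,
  (forall k m, (j <= m < j + fuel)%nat -> mark n (F k) m = mark n (F' k) m) ->
  run n F fuel j c U = run n F' fuel j c U.
Proof.
  induction fuel as [|fuel IH]; intros j c U H; simpl; auto.
  destruct U as [|i0 U']; auto.
  rewrite (argmin_ext (fun i => mark n (F i) j) (fun i => mark n (F' i) j)).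
  2: { intros x; apply H; lia. }
  rewrite H by lia. f_equal. apply IH. intros k m Hm; apply H; lia.
Qed.

Lemma NoDup_rem (l : list nat) x : NoDup l -> NoDup (remove Nat.eq_dec x l).
Proof.
  induction l as [|a l IH]; intros H; simpl; auto.
  inversion H; subst. destruct Nat.eq_dec; auto.
  constructor; auto. intros Hin. apply in_remove in Hin. tauto.
Qed.

Lemma len_rem (l : list nat) x : NoDup l -> In x l -> length (remove Nat.eq_dec x l) = pred (length l).
Proof.
  induction l as [|a l IH]; intros H Hx; simpl; [destruct Hx|].
  inversion H; subst. destruct Nat.eq_dec as [->|Hne].
  - rewrite notin_remove; auto.
  - destruct Hx as [->|Hx]; [congruence|]. simpl. rewrite IH; auto.
    destruct l; [destruct Hx|]; simpl; lia.
Qed.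

Lemma run_pun n F i (y z : nat -> R) p :
  (forall w m, w <> i -> (1 <= m <= n)%nat -> mark n (F w) m = z m) ->
  (forall m, (1 <= m <= n)%nat -> mark n (F i) m = y m) ->
  (forall m, (1 <= m < p)%nat -> z m < y m) ->
  ((p < n)%nat -> y p < z p) -> (p <= n)%nat ->
  forall fuel j c U, (j + fuel = n)%nat -> (1 <= j <= p)%nat -> c = z (j - 1)%nat ->
   NoDup U -> In i U -> length U = S fuel ->
   find (fun e => Nat.eqb (fst e) i) (run n F fuel j c U) =
     Some (i, (z (p - 1)%nat, if Nat.eqb p n then 1 else y p)).
Proof.
  intros Hz Hy Hzy Hyz Hpn.
  induction fuel as [|fuel IH]; intros j c U Hjf Hjp Hc HU Hi Hl.
  - assert (j = n) by lia. assert (p = n) by lia. subst p c.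
    destruct U as [|u [|u' U']]; simpl in Hl; try lia.
    destruct Hi as [->|[]]. simpl. rewrite Nat.eqb_refl, Nat.eqb_refl. rewrite H. reflexivity.
  - destruct U as [|i0 U']; [destruct Hi|].
    cbn [run].
    set (g := fun k => mark n (F k) j).
    set (w := argmin g i0 U').
    assert (Hw : In w (i0 :: U')) by apply argmin_in.
    assert (Hwle : forall x, In x (i0 :: U') -> g w <= g x) by apply argmin_le.
    destruct (Nat.eq_dec j p) as [Ejp|Njp].
    + subst j.
      assert (Hp : (p < n)%nat) by lia.
      assert (Ew : w = i).
      { destruct (Nat.eq_dec w i) as [|Hne]; auto.
        specialize (Hwle i Hi). unfold g in Hwle. rewrite Hz in Hwle by lia.
        rewrite Hy in Hwle by lia. specialize (Hyz Hp). lra. }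
      rewrite Ew. cbn [find fst]. rewrite Nat.eqb_refl.
      unfold g. rewrite Hy by lia. subst c.
      replace (Nat.eqb p n) with false by (symmetry; apply Nat.eqb_neq; lia). reflexivity.
    + assert (Ho : exists o, In o (i0 :: U') /\ o <> i).
      { destruct (Nat.eq_dec i0 i) as [->|Hne].
        - destruct U' as [|u U'']; simpl in Hl; [lia|].
          exists u. split; [simpl; auto|]. inversion HU; subst. intros ->. apply H1; left; auto.
        - exists i0; split; [left|]; auto. }
      destruct Ho as [o [Ho1 Ho2]].
      assert (Nw : w <> i).
      { intros Ew. specialize (Hwle o Ho1). unfold g in Hwle. rewrite Ew in Hwle.
        rewrite Hy in Hwle by lia. rewrite (Hz o j) in Hwle by (auto; lia).
        specialize (Hzy j ltac:(lia)). lra. }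
      cbn [find fst]. replace (Nat.eqb w i) with false by (symmetry; apply Nat.eqb_neq; auto).
      apply IH.
      * lia.
      * lia.
      * replace (S j - 1)%nat with j by lia. rewrite Hz by (auto; lia). reflexivity.
      * apply NoDup_rem; auto.
      * apply in_in_remove; auto.
      * rewrite len_rem; auto.
Qed.

Fixpoint cnt (z : nat -> R) (K : nat) (x : R) : nat :=
  match K with
  | O => O
  | S K' => ((if Rle_dec (z (S K')) x then 1 else 0) + cnt z K' x)%nat
  end.

Lemma cnt_le z K x : (cnt z K x <= K)%nat.
Proof. induction K; simpl; [lia|]. destruct Rle_dec; lia. Qed.

Lemma cnt_val z N : (forall m, (m < N)%nat -> z m < z (S m)) ->
  forall K, (K < N)%nat -> forall m x, (m < N)%nat -> z m <= x < z (S m) ->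
  cnt z K x = Nat.min K m.
Proof.
  intros Hz. induction K as [|K IH]; intros HK m x Hm Hx; cbn [cnt]; [lia|].
  rewrite (IH ltac:(lia) m x Hm Hx). destruct Rle_dec as [Hl|Hl].
  - destruct (Compare_dec.le_lt_dec (S K) m) as [L|L]; [lia|].
    assert (z (S m) <= z (S K)) by (apply (p_mono z N Hz); lia). lra.
  - destruct (Compare_dec.le_lt_dec (S K) m) as [L|L]; [|lia].
    assert (z (S K) <= z m) by (apply (p_mono z N Hz); lia). lra.
Qed.

Definition gdens (z : nat -> R) (n : nat) (x : R) : R :=
  / (z (S (cnt z (n - 1) x)) - z (cnt z (n - 1) x)).

Lemma gdens_piece z n : (0 < n)%nat -> (forall m, (m < n)%nat -> z m < z (S m)) ->
  forall m x, (m < n)%nat -> z m <= x < z (S m) -> gdens z n x = / (z (S m) - z m).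
Proof.
  intros Hn Hz m x Hm Hx. unfold gdens. rewrite (cnt_val z n Hz (n - 1) ltac:(lia) m x Hm Hx).
  replace (Nat.min (n - 1) m) with m by lia. reflexivity.
Qed.

Lemma gdens_pc z n : (0 < n)%nat -> z 0%nat = 0 -> z n = 1 ->
  (forall m, (m < n)%nat -> z m < z (S m)) -> pc_pos (gdens z n).
Proof.
  intros Hn H0 H1 Hz. split.
  - intros x _. unfold gdens. apply Rinv_0_lt_compat.
    pose proof (cnt_le z (n - 1) x). pose proof (Hz (cnt z (n - 1) x) ltac:(lia)). lra.
  - exists n, z, (fun m => / (z (S m) - z m)). repeat split; auto.
    apply gdens_piece; auto.
Qed.

Lemma mingap (y : nat -> R) N : (forall k, (1 <= k <= N)%nat -> y (k - 1)%nat < y k) ->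
  exists d, 0 < d /\ forall k, (1 <= k <= N)%nat -> d <= y k - y (k - 1)%nat.
Proof.
  induction N as [|N IH]; intros H.
  - exists 1; split; [lra|]. intros; lia.
  - destruct IH as [d [Hd Hk]]. { intros k Hk; apply H; lia. }
    exists (Rmin d (y (S N) - y (S N - 1)%nat)). split.
    + apply Rmin_glb_lt; auto. specialize (H (S N) ltac:(lia)). lra.
    + intros k Hk'. destruct (Nat.eq_dec k (S N)) as [->|Hne]; [apply Rmin_r|].
      eapply Rle_trans; [apply Rmin_l|apply Hk; lia].
Qed.

Lemma tele (A : nat -> R) d N : (forall k, (1 <= k <= N)%nat -> A k - A (k - 1)%nat >= d) ->
  forall a b, (a <= b <= N)%nat -> A b - A a >= INR (b - a) * d.
Proof.
  intros H a b. induction b as [|b IH]; intros Hab.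
  - assert (a = 0%nat) by lia. subst. simpl. lra.
  - destruct (Nat.eq_dec a (S b)) as [->|Hne].
    + rewrite Nat.sub_diag. simpl. lra.
    + specialize (IH ltac:(lia)). specialize (H (S b) ltac:(lia)).
      replace (S b - 1)%nat with b in H by lia.
      replace (S b - a)%nat with (S (b - a)) by lia. rewrite S_INR. lra.
Qed.

Theorem mainTheorem10 : risk_averse_truthful pc_pos alg3.
Proof.
  intros n i f f' Hin Hf Hf'.
  destruct (pc_good f Hf) as [mu [M G]].
  destruct (pc_good f' Hf') as [mu' [M' G']].
  assert (Hn : (0 < n)%nat) by lia.
  destruct (classic (forall m, (1 <= m < n)%nat -> mark n f m = mark n f' m)) as [Heq|Hne].
  { left. intros Gs _. unfold alg3, alg3_alloc.
    rewrite (run_ext n (upd Gs i f) (upd Gs i f')). apply Rge_refl.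
    intros k m Hm. unfold upd. destruct Nat.eq_dec; auto. apply Heq; lia. }
  right.
  assert (Hm0 : exists m0, (1 <= m0 < n)%nat /\ mark n f m0 <> mark n f' m0).
  { apply NNPP. intros C. apply Hne. intros m Hm. apply NNPP. intros C2. apply C. exists m. auto. }
  destruct Hm0 as [m0 [Hm0 Hdiff]].
  pose proof (g_pos_total f mu M G) as HT. pose proof (g_pos_total f' mu' M' G') as HT'.
  set (T := RInt f 0 1 : R) in *. set (T' := RInt f' 0 1 : R) in *.
  assert (HnR : 0 < INR n) by (apply lt_0_INR; lia).
  set (y := fun k => mark n f' k).
  assert (Hys : forall k, (k <= n)%nat -> 0 <= y k <= 1 /\ RInt f' 0 (y k) = INR k / INR n * T').
  { intros k Hk. apply (mark_spec f' mu' M'); auto. }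
  assert (Hy0 : y 0%nat = 0).
  { apply (mark_eq f' mu' M'); auto; try lia; try lra. rewrite RInt_point.
    change (0 = 0 / INR n * T'). unfold Rdiv; ring. }
  assert (Hy1 : y n = 1).
  { apply (mark_eq f' mu' M'); auto; try lia; try lra. change (T' = INR n / INR n * T'). field. lra. }
  assert (Hymono : forall a b, (a < b <= n)%nat -> y a < y b).
  { intros a b Hab. destruct (Hys a ltac:(lia)) as [Ra Ea]. destruct (Hys b ltac:(lia)) as [Rb Eb].
    destruct (Rlt_dec (y a) (y b)) as [|Hl]; auto. exfalso.
    assert (RInt f' 0 (y b) <= RInt f' 0 (y a)).
    { destruct (Req_dec (y a) (y b)) as [E|E]; [rewrite E; lra|].
      left. apply (g_strict f' mu' M'); auto; lra. }
    assert (INR a < INR b) by (apply lt_INR; lia).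
    assert (INR a / INR n * T' < INR b / INR n * T').
    { unfold Rdiv. apply Rmult_lt_compat_r; [lra|]. apply Rmult_lt_compat_r; [|lra].
      apply Rinv_0_lt_compat; lra. }
    lra. }
  assert (Hp : exists p, (1 <= p <= n)%nat /\ RInt f (y (p - 1)%nat) (y p) < T / INR n).
  { apply NNPP; intros C.
    assert (Hge : forall k, (1 <= k <= n)%nat ->
               RInt f 0 (y k) - RInt f 0 (y (k - 1)%nat) >= T / INR n).
    { intros k Hk. destruct (Rlt_dec (RInt f (y (k - 1)%nat) (y k)) (T / INR n)) as [Hl|Hl].
      - exfalso; apply C; exists k; auto.
      - destruct (Hys k ltac:(lia)). destruct (Hys (k - 1)%nat ltac:(lia)).
        pose proof (g_chas f mu M 0 (y (k - 1)%nat) (y k) G ltac:(lra) ltac:(lra) ltac:(lra)).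
        lra. }
    pose proof (tele (fun k => RInt f 0 (y k)) (T / INR n) n Hge 0 m0 ltac:(lia)) as E1.
    pose proof (tele (fun k => RInt f 0 (y k)) (T / INR n) n Hge m0 n ltac:(lia)) as E2.
    cbv beta in E1, E2. rewrite Hy0, RInt_point in E1. rewrite Hy1 in E2. fold T in E2.
    change zero with 0 in E1.
    rewrite Nat.sub_0_r in E1. rewrite minus_INR in E2 by lia.
    apply Hdiff.
    destruct (Hys m0 ltac:(lia)).
    apply (mark_eq f mu M); auto; try lia. fold T.
    set (q := T / INR n) in *.
    assert (Hq : INR n * q = T) by (unfold q; field; lra).
    assert (Hq2 : INR m0 / INR n * T = INR m0 * q) by (unfold q; field; lra).
    rewrite Hq2.
    assert (E3 : (INR n - INR m0) * q = T - INR m0 * q) by (rewrite <- Hq; ring).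
    rewrite E3 in E2. change (RInt f 0 (y m0) = INR m0 * q). lra. }
  destruct Hp as [p [Hp Hpiece]].
  destruct (mingap y n) as [dl [Hdl Hgap]].
  { intros k Hk. apply Hymono; lia. }
  set (s := T / INR n - RInt f (y (p - 1)%nat) (y p)).
  assert (Hs : 0 < s) by (unfold s; lra).
  assert (HM : 0 < M). { destruct G as [Hmu [Hb _]]. specialize (Hb 0 ltac:(lra)). lra. }
  set (eps := Rmin (dl / 3) (s / (M + 1))).
  assert (He1 : 0 < eps) by (apply Rmin_glb_lt; apply Rdiv_lt_0_compat; lra).
  assert (He2 : eps <= dl / 3) by apply Rmin_l.
  assert (He3 : eps * (M + 1) <= s).
  { assert (eps <= s / (M + 1)) by apply Rmin_r.
    apply Rmult_le_compat_r with (r := M + 1) in H; [|lra].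
    unfold Rdiv in H. rewrite Rmult_assoc, Rinv_l in H by lra. lra. }
  set (z := fun k => if Nat.eqb k 0 then 0 else if Nat.leb n k then 1
                     else if Nat.ltb k p then y k - eps else y k + eps).
  assert (Hz0 : z 0%nat = 0) by reflexivity.
  assert (Hzn : z n = 1).
  { unfold z. destruct (Nat.eqb_spec n 0); [lia|]. rewrite Nat.leb_refl. reflexivity. }
  assert (Hzinc : forall m, (m < n)%nat -> z m < z (S m)).
  { intros m Hm. pose proof (Hgap (S m) ltac:(lia)) as Hg. replace (S m - 1)%nat with m in Hg by lia.
    assert (Hsm : (n <= S m)%nat -> y (S m) = 1).
    { intros L. replace (S m) with n by lia. exact Hy1. }
    unfold z.
    destruct (Nat.eqb_spec m 0) as [E0|E0]; destruct (Nat.eqb_spec (S m) 0); [lia| |lia|];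
    destruct (Nat.leb_spec0 n m); try lia;
    destruct (Nat.leb_spec0 n (S m)) as [L|L];
    destruct (Nat.ltb_spec0 m p); destruct (Nat.ltb_spec0 (S m) p);
    try (subst m; rewrite Hy0 in Hg); try (specialize (Hsm L)); lra. }
  assert (Hzr : forall k, (k <= n)%nat -> 0 <= z k <= 1).
  { intros k Hk. rewrite <- Hz0, <- Hzn. split; apply (p_mono z n Hzinc); lia. }
  set (g := gdens z n).
  assert (Hg : pc_pos g) by (apply gdens_pc; auto).
  destruct (pc_good g Hg) as [mug [Mg Gg]].
  assert (Hgint : forall j, (j <= n)%nat -> RInt g (z 0%nat) (z j) = INR j * 1).
  { apply (pc_int_val g z (fun m => / (z (S m) - z m)) n 1 Hzinc).
    - apply gdens_piece; auto.
    - intros m Hm. specialize (Hzinc m Hm). field. lra. }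
  assert (Hmg : forall k, (1 <= k <= n)%nat -> mark n g k = z k).
  { intros k Hk. apply (mark_eq g mug Mg); auto; try lia; [idtac|idtac].
    - apply Hzr; lia.
    - pose proof (Hgint k ltac:(lia)) as H1. pose proof (Hgint n ltac:(lia)) as H2.
      rewrite Hz0 in H1, H2. rewrite Hzn in H2. rewrite H1, H2. change (INR k * 1 = INR k / INR n * (INR n * 1)). field. lra. }
  exists (fun _ => g). split.
  { intros; exact Hg. }
  assert (S1 : forall w m, w <> i -> (1 <= m <= n)%nat -> mark n (upd (fun _ => g) i f' w) m = z m).
  { intros w m Hw Hm. unfold upd. destruct Nat.eq_dec; [contradiction|]. apply Hmg; lia. }
  assert (S2 : forall m, (1 <= m <= n)%nat -> mark n (upd (fun _ => g) i f' i) m = y m).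
  { intros m Hm. unfold upd. destruct Nat.eq_dec; [reflexivity|congruence]. }
  assert (S3 : forall m, (1 <= m < p)%nat -> z m < y m).
  { intros m Hm. unfold z. destruct (Nat.eqb_spec m 0); [lia|].
    destruct (Nat.leb_spec0 n m); [lia|]. destruct (Nat.ltb_spec0 m p); [lra|lia]. }
  assert (S4 : (p < n)%nat -> y p < z p).
  { intros Hpn. unfold z. destruct (Nat.eqb_spec p 0); [lia|].
    destruct (Nat.leb_spec0 n p); [lia|]. destruct (Nat.ltb_spec0 p p); [lia|lra]. }
  unfold alg3, alg3_alloc.
  rewrite (run_pun n (upd (fun _ => g) i f') i y z p S1 S2 S3 S4 ltac:(lia) (n - 1)%nat 1%nat 0 (seq 0 n)).
  -
    replace (if Nat.eqb p n then 1 else y p) with (y p).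
    2: { destruct (Nat.eqb_spec p n); auto. subst; auto. }
    unfold val; simpl fst; simpl snd.
    destruct (Hys (p - 1)%nat ltac:(lia)) as [Ryp _]. destruct (Hys p ltac:(lia)) as [Ryp' _].
    assert (Hzp : 0 <= y (p - 1)%nat - z (p - 1)%nat <= eps).
    { unfold z. destruct (Nat.eqb_spec (p - 1) 0) as [E|E].
      - rewrite E, Hy0. lra.
      - destruct (Nat.leb_spec0 n (p - 1)); [lia|]. destruct (Nat.ltb_spec0 (p - 1) p); [lra|lia]. }
    pose proof (Hzr (p - 1)%nat ltac:(lia)).
    rewrite <- (g_chas f mu M (z (p - 1)%nat) (y (p - 1)%nat) (y p) G) by lra.
    pose proof (g_bnd f mu M (z (p - 1)%nat) (y (p - 1)%nat) G ltac:(lra) ltac:(lra) ltac:(lra)).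
    assert (M * (y (p - 1)%nat - z (p - 1)%nat) <= M * eps) by (apply Rmult_le_compat_l; lra).
    unfold s in He3. fold T. unfold Rdiv in He3. rewrite Rmult_comm in He3.
    assert (T * / INR n = / INR n * T) by ring. nra.
  - lia.
  - lia.
  - reflexivity.
  - apply seq_NoDup.
  - apply in_seq; lia.
  - rewrite length_seq; lia.
Qed.
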